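(* Let $N$ be an odd natural number and let $b_1,\dots,b_N$ be integers such that $b_1,b_3,b_5,\dots,b_N$ (the entries with odd index) are all even. Suppose $p,q$ are relatively prime integers with $q\neq 0$ and $p/q=[b_1,b_2,\dots,b_N]$, where $$[b_1,b_2,\dots,b_N]=b_1-\cfrac{1}{b_2-\cfrac{1}{b_3-\cdots-\cfrac{1}{b_N}}}$$ (all intermediate denominators being nonzero). Then $$p\equiv(-1)^{\frac{N-1}{2}}(b_1+b_3+\cdots+b_N)\pmod 4.$$ *)

(* Defs.v *)
From mathcomp Require Import all_boot all_order all_algebra.
Set Implicit Arguments. Unset Strict Implicit. Unset Printing Implicit Defensive.
Import Order.TTheory GRing.Theory Num.Theory.
Local Open Scope ring_scope.

(* Negative (Hirzebruch–Jung) continued fraction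
   [b1, b2, ..., bN] = b1 - 1/(b2 - 1/(... - 1/bN)), valued in rat.
   The empty sequence is given the junk value 0 (never used: N is odd). *)
Fixpoint ncf (s : seq int) : rat :=
  match s with
  | [::] => 0
  | b :: s' => if s' is [::] then b%:~R else b%:~R - (ncf s')^-1
  end.

Fixpoint ncf_ok (s : seq int) : bool :=
  match s with
  | [::] => true
  | b :: s' => if s' is [::] then true else ncf_ok s' && (ncf s' != 0)
  end.

(* Main.v *)
Require Import Defs.
From mathcomp Require Import all_boot all_order all_algebra.
From mathcomp Require Import zify ring.
Import Order.TTheory GRing.Theory Num.Theory.
Local Open Scope ring_scope.

Fixpoint nd (s : seq int) : int * int :=
  match s with
  | [::] => (1, 0)
  | b :: s' => ((b * (nd s').1 - (nd s').2), (nd s').1)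
  end.

Lemma nd_bez s : exists uv : int * int, uv.1 * (nd s).1 + uv.2 * (nd s).2 = 1.
Proof.
elim: s => [|b s [[u v] /= H]]; first by exists (1, 0) => /=; ring.
exists (-v, u + v * b) => /=; rewrite -H; ring.
Qed.

Lemma ncf2 b c s : ncf [:: b, c & s] = b%:~R - (ncf (c :: s))^-1.
Proof. by []. Qed.
Lemma ok2 b c s : ncf_ok [:: b, c & s] = ncf_ok (c :: s) && (ncf (c :: s) != 0).
Proof. by []. Qed.
Lemma nd2 b s : nd (b :: s) = (b * (nd s).1 - (nd s).2, (nd s).1).
Proof. by []. Qed.

Lemma alg (b n d : int) : n != 0 -> d != 0 ->
  b%:~R - (n%:~R / d%:~R)^-1 = (b * n - d)%:~R / n%:~R :> rat.
Proof.
move=> n0 d0.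
have nR : n%:~R != 0 :> rat by rewrite intr_eq0.
have dR : d%:~R != 0 :> rat by rewrite intr_eq0.
rewrite intrD intrM intrN invf_div; by field.
Qed.

Lemma nd_ncf s : ncf_ok s -> s != [::] ->
  (nd s).2 != 0 /\ ncf s = (nd s).1%:~R / (nd s).2%:~R.
Proof.
elim: s => [//|b s IH].
case: s IH => [|c s] IH.
  by move=> _ _; rewrite /= mulr1 subr0 divr1.
rewrite ok2 => /andP[ok nz] _; have [d0 E] := IH ok isT.
have n0 : (nd (c :: s)).1 != 0.
  by apply: contra nz; rewrite E => /eqP ->; rewrite mul0r.
rewrite ncf2 E nd2; split; [exact: n0 | exact: alg].
Qed.

Definition Sev (s : seq int) := \sum_(0 <= i < size s | ~~ odd i) s`_i.

Lemma S_cons2 a c s : Sev [:: a, c & s] = a + Sev s.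
Proof.
rewrite /Sev /= big_mkcond big_nat_recl // big_nat_recl //= add0r.
by rewrite [in RHS]big_mkcond; congr (_ + _); apply: eq_bigr => i _; rewrite !negbK.
Qed.

Lemma S_one a : Sev [:: a] = a.
Proof. by rewrite /Sev /= big_mkcond big_nat_recl //= big_geq // addr0. Qed.

Lemma sgn k : (-1) ^+ k = 1 :> int \/ (-1) ^+ k = -1 :> int.
Proof. by rewrite -signr_odd; case: (odd k); [right|left]. Qed.

Lemma inv k : forall s, size s = (2 * k + 1)%N ->
  (forall i : nat, (i < size s)%N -> ~~ odd i -> (2 %| s`_i)%Z) ->
  exists K m e : int, (nd s).1 = (-1) ^+ k * Sev s + 4 * K /\ Sev s = 2 * m
     /\ (nd s).2 = 2 * e + 1.
Proof.
elim: k => [|k IH].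
  move=> s.
  case: s => [|a [|//]] // _ H.
  have /dvdzP[a0 Ha] := H 0%N isT isT.
  have -> : a = a0 * 2 := Ha.
  exists 0, a0, 0; rewrite S_one /= expr0; split; [lia|split; lia].
case=> [|a [|c s]] Hs H; try by move: Hs => /=; lia.
have Hs' : size s = (2 * k + 1)%N by move: Hs => /=; lia.
have /dvdzP[a0 Ha'] := H 0%N isT isT.
have Ha : a = a0 * 2 := Ha'.
have [K [m [e [Hn [Hm Hd]]]]] : exists K m e : int, (nd s).1 = (-1) ^+ k * Sev s + 4 * K /\ Sev s = 2 * m
     /\ (nd s).2 = 2 * e + 1.
  apply: IH => // i Hi Hodd; by apply: (H i.+2) => //=; rewrite negbK.
rewrite S_cons2 Hm exprS Ha !nd2.
case: (nd s) Hn Hd => n d /= -> ->.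
rewrite Hm.
case: (sgn k) => ->.
  exists (a0 * c * (m + 2 * K) - a0 * e - K), (a0 + m), (c * (m + 2 * K) - e - 1).
  split; [ring|split; ring].
exists (a0 * c * (2 * K - m) - a0 * e - a0 - K), (a0 + m), (c * (2 * K - m) - e - 1).
split; [ring|split; ring].
Qed.

Theorem lemma7 (N : nat) (b : seq int) (p q : int) :
  odd N -> size b = N ->
  (forall i : nat, (i < N)%N -> ~~ odd i -> (2 %| b`_i)%Z) ->
  coprimez p q -> q != 0 ->
  ncf_ok b ->
  p%:~R / q%:~R = ncf b :> rat ->
  (p = (-1) ^+ (N.-1)./2 * (\sum_(0 <= i < N | ~~ odd i) b`_i) %[mod 4])%Z.
Proof.
move=> oN sz Hev cop q0 ok E.
have HN : N = (N./2).*2.+1 by rewrite -[LHS]odd_double_half oN.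
have bne : b != [::] by apply/eqP => b0; move: sz; rewrite b0 HN.
have [d0 Encf] := nd_ncf _ ok bne.
have Hk : (N.-1)./2 = N./2 by rewrite {1}HN /= doubleK.
have sz' : size b = (2 * N./2 + 1)%N by rewrite sz {1}HN -mul2n addn1.
have [K [m [e [Hn [Hm Hd]]]]] := inv _ _ sz' (fun i Hi => Hev i (eq_ind _ (fun x => is_true (i < x)%N) Hi _ sz)).
have HS : Sev b = \sum_(0 <= i < N | ~~ odd i) b`_i by rewrite /Sev sz.
rewrite Hk -HS.
move: Hn Hm Hd d0 Encf (nd_bez b).
case: (nd b) => n d /= Hn Hm Hd d0 Encf bez.
have cnd : coprimez n d by apply/coprimezP; case: bez => [[u v] /= H]; exists (u, v).
have pd : p * d = n * q.
  apply/eqP; rewrite -(eqr_int rat) !intrM; rewrite -eqr_div ?intr_eq0 //.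
  by rewrite E Encf.
have pn : (p %| n)%Z by rewrite -(Gauss_dvdzl _ cop) -pd dvdz_mulr.
have np : (n %| p)%Z by rewrite -(Gauss_dvdzl _ cnd) pd dvdz_mulr.
case/dvdzP: pn => x Hx; case/dvdzP: np => y Hy.
have Hy' : p = n \/ p = - n.
  have [n00|n0] := eqVneq n 0; first by left; rewrite Hy n00 mulr0.
  have xy : x * y = 1.
    apply: (mulIf n0); rewrite mul1r -mulrA -Hy -Hx //.
  have ay : `|y|%N = 1%N.
    by move/(congr1 absz): xy; rewrite abszM => /eqP; rewrite muln_eq1 => /andP[_ /eqP].
  have : y = 1 \/ y = -1 by lia.
  by case => Ey; [left|right]; rewrite Hy Ey ?mul1r ?mulN1r.
rewrite Hm; case: (sgn (N./2)) => Et; rewrite Et;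
  case: Hy' => ->; rewrite Hn Et Hm.
- by rewrite (mulrC 4 K) addrC modzMDl.
- have -> : - (1 * (2 * m) + 4 * K) = (- m - K) * 4 + 1 * (2 * m) by ring.
  by rewrite modzMDl.
- by rewrite (mulrC 4 K) addrC modzMDl.
- have -> : - (-1 * (2 * m) + 4 * K) = (m - K) * 4 + -1 * (2 * m) by ring.
  by rewrite modzMDl.
Qed.
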